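(* Let $A$ be an $n\times n$ dilation matrix and let $\mu$ be its smallest singular value. If $\mu>2$, then $A$ yields a radix representation of $\mathbb{Z}^n$ with digit set $D=A(F)\cap\mathbb{Z}^n$, where $F=[-\tfrac12,\tfrac12)^n$; that is, every $x\in\mathbb{Z}^n$ can be written as $\sum_{j=0}^NA^jd_j$ with $N\ge0$ and $d_j\in D$.
   Context: A dilation matrix is an $n\times n$ matrix with integer entries all of whose eigenvalues $\lambda$ satisfy $|\lambda|>1$. $D$ is a complete set of coset representatives of $\mathbb{Z}^n/A(\mathbb{Z}^n)$. *)

(* Defs.v *)
From HB Require Import structures.
From mathcomp Require Import all_boot all_order all_algebra all_field.
Set Implicit Arguments. Unset Strict Implicit. Unset Printing Implicit Defensive.
Import Order.TTheory GRing.Theory Num.Theory.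
Local Open Scope ring_scope.

Definition mxC (n : nat) (A : 'M[int]_n) : 'M[algC]_n := map_mx (fun z : int => z%:~R) A.

Definition eigenvalue_of (n : nat) (A : 'M[int]_n) (l : algC) : Prop :=
  root (char_poly (mxC A)) l.

Definition dilation (n : nat) (A : 'M[int]_n) : Prop :=
  forall l, eigenvalue_of A l -> 1 < `|l|.

Definition singular_value (n : nat) (A : 'M[int]_n) (s : algC) : Prop :=
  0 <= s /\ root (char_poly (mxC (A^T *m A))) (s ^+ 2).

(* smallest singular value > c  <=>  every singular value > c *)
Definition min_singular_value_gt (n : nat) (A : 'M[int]_n) (c : algC) : Prop :=
  forall s, singular_value A s -> c < s.

Definition in_F (n : nat) (y : 'cV[algC]_n) : Prop :=
  forall i, y i 0 \is Num.real /\ - (2%:R)^-1 <= y i 0 /\ y i 0 < (2%:R)^-1.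

Definition digit (n : nat) (A : 'M[int]_n) (d : 'cV[int]_n) : Prop :=
  exists y : 'cV[algC]_n, in_F y /\ mxC A *m y = map_mx (fun z : int => z%:~R) d.

Definition mxpow (n : nat) (A : 'M[int]_n) (j : nat) : 'M[int]_n :=
  iter j (mulmx A) 1%:M.

(* Main.v *)
Require Import Defs.
From HB Require Import structures.
From mathcomp Require Import all_boot all_order all_algebra all_field.
Import Order.TTheory GRing.Theory Num.Theory Num.Def.
Local Open Scope ring_scope.
Local Open Scope sesquilinear_scope.

Lemma sum_lt4 n (c d : 'I_n -> algC) : (forall k, 0 <= c k) -> (forall k, 4 < d k) ->
  (exists k, c k != 0) -> 4 * (\sum_k c k) < \sum_k c k * d k.
Proof.
move=> c0 d4 [k0 ck0]; rewrite mulr_sumr (bigD1 k0) //= [X in _ < X](bigD1 k0) //=.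
apply: ltr_leD.
  have cp : 0 < c k0 by rewrite lt_def ck0 c0.
  by rewrite mulrC ltr_pM2l.
by apply: ler_sum => k _; rewrite mulrC ler_wpM2l // ltW.
Qed.

Lemma ct_mul m p q (X : 'M[algC]_(m,p)) (Y : 'M_(p,q)) : (X *m Y)^t* = Y^t* *m X^t*.
Proof. by rewrite trmx_mul map_mxM. Qed.

Section Key.
Variables (n : nat) (A : 'M[int]_n).
Hypothesis Hs : min_singular_value_gt A 2%:R.
Local Notation B := (mxC A).
Local Notation M := (mxC (A^T *m A)).

Lemma B_ct : B ^t* = B^T.
Proof. by apply/matrixP => i j; rewrite !mxE rmorph_int. Qed.

Lemma BT_ct : (B^T) ^t* = B.
Proof. by apply/matrixP => i j; rewrite !mxE rmorph_int. Qed.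

Lemma M_ct : M ^t* = M.
Proof.
apply/matrixP => i j; rewrite !mxE rmorph_int; congr (_%:~R).
by apply: eq_bigr => k _; rewrite !mxE mulrC.
Qed.

Lemma ME : M = B^T *m B.
Proof. by rewrite /mxC map_mxM map_trmx. Qed.

Lemma M_normal : M \is normalmx.
Proof. by rewrite qualifE M_ct eqxx. Qed.

Let P := spectralmx M.
Let D := spectral_diag M.
Let Pu : P \is unitarymx := spectral_unitarymx M.
Let HM : M = P^t* *m diag_mx D *m P.
Proof. by rewrite -invmx_unitary //; apply/orthomx_spectralP/M_normal. Qed.

Lemma Dgt i : 4 < D 0 i.
Proof.
have PM : P *m M = diag_mx D *m P.
  by rewrite HM !mulmxA (unitarymxP Pu) mul1mx.
set w := row i P.
have wM : w *m M = D 0 i *: w.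
  by have := congr1 (row i) PM; rewrite !row_mul row_diag_mx -scalemxAl -rowE.
have ww : (w *m w^t*) 0 0 = 1.
  have := congr1 (fun X : 'M[algC]_n => X i i) (unitarymxP Pu).
  by rewrite !mxE eqxx /= => H; apply: etrans H; apply: eq_bigr => k _; rewrite !mxE.
have wMw : (w *m M *m w^t*) 0 0 = D 0 i.
  by rewrite wM -scalemxAl mxE ww mulr1.
have D0 : 0 <= D 0 i.
  rewrite -wMw ME !mulmxA -mulmxA -{2}BT_ct -ct_mul.
  rewrite mxE; apply: sumr_ge0 => k _; rewrite !mxE.
  exact: mul_conjC_ge0.
have ev : root (char_poly M) (D 0 i).
  rewrite -eigenvalue_root_char; apply/eigenvalueP; exists w => //.
  apply/eqP => w0; move: ww; rewrite w0 mul0mx mxE => /eqP; by rewrite eq_sym oner_eq0.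
have := Hs (sqrtC (D 0 i)); rewrite /singular_value sqrtC_ge0 sqrtCK => /(_ (conj D0 ev)).
move=> lt2; rewrite -(sqrtCK (D 0 i)) expr2.
have -> : 4 = 2 * 2 :> algC by rewrite -natrM.
by apply: ltr_pM => //; rewrite ler0n.
Qed.

Lemma keyq (y : 'cV[algC]_n) : y != 0 ->
  4 * (y^t* *m y) 0 0 < ((B *m y)^t* *m (B *m y)) 0 0.
Proof.
move=> y0.
have PtP : P^t* *m P = 1%:M by rewrite -invmx_unitary // mulVmx // unitarymx_unit.
set z := P *m y.
have -> : ((B *m y)^t* *m (B *m y)) = z^t* *m diag_mx D *m z.
  rewrite ct_mul B_ct mulmxA -[y^t* *m B^T *m B]mulmxA -ME HM /z ct_mul !mulmxA.
  done.
have -> : y^t* *m y = z^t* *m z.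
  by rewrite /z ct_mul !mulmxA -[y^t* *m P^t* *m P]mulmxA PtP mulmx1.
have z0 : z != 0.
  apply: contra y0 => /eqP z0.
  by rewrite -[y]mul1mx -PtP -mulmxA -/z z0 mulmx0.
clearbody z.
rewrite mul_mx_diag !mxE.
rewrite [X in _ < X](eq_bigr (fun k => conjC (z k 0) * z k 0 * D 0 k)); last first.
  by move=> k _; rewrite !mxE mulrAC.
rewrite [X in 4 * X](eq_bigr (fun k => conjC (z k 0) * z k 0)); last first.
  by move=> k _; rewrite !mxE.
apply: sum_lt4 => [k|k|].
- by rewrite mulrC mul_conjC_ge0.
- exact: Dgt.
case: (pickP (fun k => z k 0 != 0)) => [k Hk | H].
  by exists k; rewrite mulf_eq0 conjC_eq0 orbb.
exfalso; move/negP: z0; apply; apply/eqP/matrixP => k l; rewrite ord1 mxE.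
by have := H k; rewrite /= => /negbFE/eqP.
Qed.

End Key.
Lemma hh : (2%:R^-1 : algC) + 2%:R^-1 = 1.
Proof. by rewrite [RHS](splitr 1) mul1r. Qed.

Lemma round_bound (t : algC) : t \is Num.real ->
  let r := (floor (t + 2%:R^-1))%:~R : algC in
  [/\ r <= t + 2%:R^-1, t + 2%:R^-1 < r + 1 & r ^+ 2 <= 4%:R * t ^+ 2].
Proof.
move=> tr r.
have hr : (2%:R^-1 : algC) \is Num.real by rewrite realV realn.
have r1 : r <= t + 2%:R^-1 by apply: real_ge_floor; rewrite rpredD.
have r2 : t + 2%:R^-1 < r + 1.
  by rewrite /r -[1]/(1%:~R) -rmorphD; apply: real_gt_pred_ceil; rewrite rpredD.
split => //.
have E : 2%:R * t = (t + 2%:R^-1) + (t + 2%:R^-1) - 1.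
  by rewrite addrACA hh addrK mulr2n mulrDl mul1r.
have -> : 4%:R * t ^+ 2 = (2%:R * t) * (2%:R * t) :> algC.
  by rewrite mulrACA -natrM expr2.
rewrite expr2.
have [qn|qp|q0] := ltrgtP (floor (t + 2%:R^-1)) 0.
- have rn : r <= -1.
    by rewrite /r -[-1](rmorphN1 (intr : {rmorphism int -> algC})) ler_int -ltzD1.
  have lt : 2%:R * t < r.
    rewrite E; apply: (lt_le_trans (y := r + 1 + (r + 1) - 1)).
      by rewrite ltrD2r ltrD.
    by rewrite -addrA addrK gerDr -[0](addNr 1) lerD2r.
  rewrite -mulrNN -[X in _ <= X]mulrNN.
  have r0 : 0 <= - r by rewrite oppr_ge0 (le_trans rn) // lerN10.
  by apply: ler_pM => //; rewrite lerN2 ltW.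
- have rp : 1 <= r by rewrite /r -[1]/(1%:~R) ler_int.
  have le : r <= 2%:R * t.
    rewrite E; apply: (le_trans (y := r + r - 1)).
      by rewrite -addrA lerDl subr_ge0.
    by rewrite lerD2r lerD.
  have r0 : 0 <= r by rewrite (le_trans _ rp).
  by apply: ler_pM.
- by rewrite /r q0 mul0r -expr2 -realEsqr rpredM // realn.
Qed.

Section Main.
Variables (n : nat) (A : 'M[int]_n).
Hypothesis Hs : min_singular_value_gt A 2%:R.
Local Notation B := (mxC A).

Lemma B_conj : B ^ conjC = B.
Proof. by apply/matrixP => i j; rewrite !mxE rmorph_int. Qed.

Lemma Bunit : B \in unitmx.
Proof.
rewrite unitmxE unitfE -det_tr; apply/negP => /det0P [v v0 vB].
have y0 : v^T != 0 by rewrite trmx_eq0.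
have := @keyq n A Hs _ y0.
have -> : B *m v^T = 0 by rewrite -[B]trmxK -trmx_mul vB trmx0.
rewrite mulmx0 [X in _ < X]mxE => h2.
suff h1 : 0 <= 4%:R * (v^T^t* *m v^T) 0 0 by have := lt_le_trans h2 h1; rewrite ltxx.
rewrite mulr_ge0 ?ler0n // mxE; apply: sumr_ge0 => k _; rewrite !mxE mulrC.
exact: mul_conjC_ge0.
Qed.

Definition nrm (x : 'cV[int]_n) : nat := absz (\sum_i x i 0 ^+ 2).

Lemma nrmE (x : 'cV[int]_n) : (nrm x)%:Z = \sum_i x i 0 ^+ 2.
Proof. by rewrite /nrm gez0_abs // sumr_ge0 // => i _; rewrite -realEsqr num_real. Qed.

Lemma normX (x : 'cV[int]_n) :
  ((map_mx (fun z : int => z%:~R) x : 'cV[algC]_n)^t* *m map_mx (fun z : int => z%:~R) x) 0 0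
  = (\sum_i x i 0 ^+ 2)%:~R.
Proof.
rewrite mxE rmorph_sum; apply: eq_bigr => i _; rewrite !mxE rmorph_int.
by rewrite expr2 rmorphM.
Qed.

Lemma step (x : 'cV[int]_n) : x != 0 ->
  exists d q, [/\ digit A d, x = d + A *m q & (nrm q < nrm x)%N].
Proof.
move=> x0.
set X : 'cV[algC]_n := map_mx (fun z : int => z%:~R) x.
set Y := invmx B *m X.
have BY : B *m Y = X by rewrite /Y mulKVmx // Bunit.
have Yreal : forall i, Y i 0 \is Num.real.
  have : Y ^ conjC = Y.
    rewrite /Y map_mxM map_invmx B_conj; congr (_ *m _).
    by apply/matrixP => i j; rewrite !mxE rmorph_int.
  by move=> /matrixP H i; apply/CrealP; have := H i 0; rewrite mxE.
set q : 'cV[int]_n := \col_i floor (Y i 0 + 2%:R^-1).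
set Q : 'cV[algC]_n := map_mx (fun z : int => z%:~R) q.
have mapAq : map_mx (fun z : int => z%:~R) (A *m q) = B *m Q by rewrite map_mxM.
exists (x - A *m q), q; split.
- exists (Y - Q); split.
    move=> i; have [r1 r2 _] := @round_bound _ (Yreal i).
    have -> : (Y - Q) i 0 = Y i 0 - (floor (Y i 0 + 2%:R^-1))%:~R by rewrite !mxE.
    split; first by rewrite rpredB ?Yreal ?rpred_int.
    split.
      by rewrite lerBrDl lerBlDr.
    by rewrite ltrBlDr -(ltrD2r 2%:R^-1) [2%:R^-1 + _]addrC -addrA hh.
  rewrite mulmxBr BY; apply/matrixP => i j; rewrite !mxE rmorphB rmorph_sum /=; congr (_ - _).
  by apply: eq_bigr => k _; rewrite !mxE rmorphM.
- by rewrite subrK.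
- rewrite -ltz_nat !nrmE -(ltr_int algC) -[X in _ < X]normX -/X.
  have Y0 : Y != 0.
    apply: contra x0 => /eqP Y0; apply/eqP/matrixP => i j.
    have := congr1 (fun M : 'cV[algC]_n => M i j) BY.
    by rewrite Y0 mulmx0 !mxE => /esym/eqP; rewrite intr_eq0 => /eqP.
  have K := @keyq n A Hs _ Y0; rewrite BY in K.
  apply: le_lt_trans K.
  rewrite [(Y^t* *m Y) 0 0]mxE mulr_sumr rmorph_sum /=; apply: ler_sum => i _.
  have [_ _ r3] := @round_bound _ (Yreal i).
  rewrite [(Y^t*) 0 i]mxE [(Y^T) 0 i]mxE conj_Creal ?Yreal // -expr2 rmorphXn /=.
  by rewrite [q i 0]mxE.
Qed.

End Main.

Local Close Scope sesquilinear_scope.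

Theorem mainTheorem8 (n : nat) (A : 'M[int]_n) :
  dilation A -> min_singular_value_gt A 2%:R ->
  forall x : 'cV[int]_n, exists (N : nat) (d : nat -> 'cV[int]_n),
    (forall j, (j <= N)%N -> digit A (d j)) /\
    x = \sum_(j < N.+1) mxpow A j *m d j.
Proof.
move=> _ Hs x.
have [k Hk] := ubnP (@nrm n x); elim: k x Hk => // k IH x Hk.
have [->|x0] := eqVneq x 0.
  exists 0%N, (fun _ => 0); split.
    move=> j _; exists 0; split; last by rewrite !mulmx0 map_mx0.
    move=> i; rewrite mxE; split; first exact: real0.
    by rewrite oppr_le0 invr_ge0 ler0n invr_gt0 ltr0n.
  by rewrite big_ord1 mulmx0.
have [d [q [dd xE lt]]] := @step n A Hs x x0.
have [N [e [He qE]]] := IH q (leq_trans lt Hk).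
exists N.+1, (fun j => if j is j'.+1 then e j' else d); split.
  by case=> [|j] //= /He.
rewrite big_ord_recl /= mul1mx xE qE mulmx_sumr; congr (_ + _).
by apply: eq_bigr => i _; rewrite mulmxA.
Qed.
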